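(* Let $\mathbf X=(X_1,\dots,X_n)$ be a random vector whose components are mutually independent, each $X_i$ taking values in a finite set $V_i\subset\mathbb{R}$, and let $f:\mathbb{R}^n\to\mathbb{R}$ be arbitrary. Then for all $T\subset T'\subset[n]$ and every $j\in[n]\setminus T'$, $$\mathrm{EVar}(T\cup\{j\})-\mathrm{EVar}(T)\ \ge\ \mathrm{EVar}(T'\cup\{j\})-\mathrm{EVar}(T').$$
   Context: For $T=\{i_1<\dots<i_k\}\subseteq[n]$ write $\mathbf X_T=(X_{i_1},\dots,X_{i_k})$ and $\mathbf V_T=V_{i_1}\times\dots\times V_{i_k}$. Define $$\mathrm{EVar}(T)=\sum_{\mathbf v\in\mathbf V_T,\ \Pr[\mathbf X_T=\mathbf v]>0}\Pr[\mathbf X_T=\mathbf v]\cdot \mathrm{Var}\big(f(\mathbf X)\mid \mathbf X_T=\mathbf v\big),$$ with $\mathrm{EVar}(\emptyset)=\mathrm{Var}(f(\mathbf X))$. *)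

(* Defs.v *)
From HB Require Import structures.
From mathcomp Require Import all_boot all_order all_algebra.
Set Implicit Arguments. Unset Strict Implicit. Unset Printing Implicit Defensive.
Import Order.TTheory GRing.Theory Num.Theory.
Local Open Scope ring_scope.

Section Defs.
Variables (R : realFieldType) (Omega : finType) (P : Omega -> R).

Definition Prob (A : pred Omega) : R := \sum_(w | A w) P w.

Definition cexp (A : pred Omega) (g : Omega -> R) : R :=
  (\sum_(w | A w) P w * g w) / Prob A.

Definition cvar (A : pred Omega) (g : Omega -> R) : R :=
  cexp A (fun w => (g w - cexp A g) ^+ 2).

Variable n : nat.
Variable X : 'I_n -> Omega -> R.

Definition mutually_independent : Prop :=
  forall (S : {set 'I_n}) (v : 'I_n -> R),
    Prob (fun w => [forall i in S, X i w == v i]) =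
    \prod_(i in S) Prob (fun w => X i w == v i).

Definition Xvec (w : Omega) : n.-tuple R := [tuple X i w | i < n].

(* X_T(w), encoded as an n-tuple whose coordinates outside T are 0 *)
Definition XT (T : {set 'I_n}) (w : Omega) : n.-tuple R :=
  [tuple if i \in T then X i w else 0 | i < n].

Definition EVar (f : n.-tuple R -> R) (T : {set 'I_n}) : R :=
  \sum_(v <- undup [seq XT T w | w <- enum Omega]
          | 0 < Prob (fun w => XT T w == v))
     Prob (fun w => XT T w == v) *
     cvar (fun w => XT T w == v) (fun w => f (Xvec w)).

Definition Var (f : n.-tuple R -> R) : R := cvar predT (fun w => f (Xvec w)).

End Defs.

(* Main.v *)
Require Import Defs.
From HB Require Import structures.
From mathcomp Require Import all_boot all_order all_algebra.
From mathcomp Require Import ring lra.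
Import Order.TTheory GRing.Theory Num.Theory.
Set Implicit Arguments. Unset Strict Implicit. Unset Printing Implicit Defensive.
Local Open Scope ring_scope.

Section Gen.
Variables (R : realFieldType) (Omega : finType) (P : Omega -> R).
Hypothesis P_ge0 : forall w, 0 <= P w.

Definition Ex (F : Omega -> R) := \sum_w P w * F w.
Definition mc (K : eqType) (k : Omega -> K) (F : Omega -> R) (w : Omega) :=
  cexp P (fun u => k u == k w) F.
Definition meas (K : eqType) (k : Omega -> K) (h : Omega -> R) :=
  forall u w, k u = k w -> h u = h w.
Definition refines (K1 K2 : eqType) (k1 : Omega -> K1) (k2 : Omega -> K2) :=
  forall u w, k1 u = k1 w -> k2 u = k2 w.

Lemma Prob_ge0 A : 0 <= Prob P A.
Proof. by apply: sumr_ge0 => w _; exact: P_ge0. Qed.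

Lemma P_le_Prob (A : pred Omega) w : A w -> P w <= Prob P A.
Proof.
move=> Aw; rewrite /Prob (bigD1 w) //= lerDl; apply: sumr_ge0 => u _; exact: P_ge0.
Qed.

Lemma Prob_neq0 (A : pred Omega) w : A w -> P w != 0 -> Prob P A != 0.
Proof.
move=> Aw Pw; have h : 0 < P w by rewrite lt_def Pw P_ge0.
by rewrite gt_eqF // (lt_le_trans h (P_le_Prob Aw)).
Qed.

Lemma Prob0_P0 (A : pred Omega) w : A w -> Prob P A = 0 -> P w = 0.
Proof.
move=> Aw H; case: (eqVneq (P w) 0) => // Pw.
by move: (Prob_neq0 Aw Pw); rewrite H eqxx.
Qed.

Lemma Ex_ae F G : (forall u, P u != 0 -> F u = G u) -> Ex F = Ex G.
Proof.
move=> H; apply: eq_bigr => u _.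
by case: (eqVneq (P u) 0) => [->|/H ->]; rewrite ?mul0r.
Qed.

Lemma ExD F G : Ex (fun u => F u + G u) = Ex F + Ex G.
Proof. by rewrite /Ex -big_split; apply: eq_bigr => u _; rewrite mulrDr. Qed.

Lemma ExB F G : Ex (fun u => F u - G u) = Ex F - Ex G.
Proof. by rewrite /Ex -sumrB; apply: eq_bigr => u _; rewrite mulrBr. Qed.

Lemma ExZ c F : Ex (fun u => c * F u) = c * Ex F.
Proof. by rewrite /Ex mulr_sumr; apply: eq_bigr => u _; rewrite mulrCA. Qed.

Lemma Ex_ge0 F : (forall u, 0 <= F u) -> 0 <= Ex F.
Proof. by move=> H; apply: sumr_ge0 => u _; rewrite mulr_ge0. Qed.

Lemma mc_ae (K : eqType) (k : Omega -> K) F G w :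
  (forall u, P u != 0 -> F u = G u) -> mc k F w = mc k G w.
Proof.
move=> H; rewrite /mc /cexp; congr (_ * _); apply: eq_bigr => u _.
by case: (eqVneq (P u) 0) => [->|/H ->]; rewrite ?mul0r.
Qed.

Lemma mcB (K : eqType) (k : Omega -> K) F G w :
  mc k (fun u => F u - G u) w = mc k F w - mc k G w.
Proof.
rewrite /mc /cexp -mulrBl -sumrB; congr (_ * _).
by apply: eq_bigr => u _; rewrite mulrBr.
Qed.

Lemma mc_meas (K : eqType) (k : Omega -> K) F : meas k (mc k F).
Proof. by move=> u w e; rewrite /mc e. Qed.

Lemma pullout (K : eqType) (k : Omega -> K) h F w : meas k h ->
  mc k (fun u => h u * F u) w = h w * mc k F w.
Proof.
move=> hm; rewrite /mc /cexp [RHS]mulrA [in RHS]mulr_sumr; congr (_ * _).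
by apply: eq_bigr => u /eqP e; rewrite (hm _ _ e) mulrCA.
Qed.

Lemma mc_measid (K : eqType) (k : Omega -> K) h w : meas k h -> P w != 0 -> mc k h w = h w.
Proof.
move=> hm Pw; rewrite /mc /cexp.
rewrite (eq_bigr (fun u => h w * P u)) => [|u /eqP e]; last by rewrite (hm _ _ e) mulrC.
rewrite -mulr_sumr mulfK //.
exact: (Prob_neq0 (A := fun u => k u == k w) (eqxx (k w)) Pw).
Qed.

Lemma tower (K : eqType) (k : Omega -> K) F : Ex (mc k F) = Ex F.
Proof.
rewrite /Ex /mc /cexp.
transitivity (\sum_w \sum_u (if k u == k w then
   P w * (P u * F u) / Prob P (fun x => k x == k w) else 0)).
  apply: eq_bigr => w _; rewrite mulrA mulr_sumr mulr_suml big_mkcond /=.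
  by apply: eq_bigr => u _; case: ifP => //; rewrite mulrA.
rewrite exchange_big /=; apply: eq_bigr => u _.
transitivity (\sum_w (if k w == k u then P w else 0) *
                (P u * F u / Prob P (fun x => k x == k u))).
  apply: eq_bigr => w _; case: (eqVneq (k u) (k w)) => [e|ne].
    by rewrite e !mulrA.
  by rewrite mul0r.
rewrite -mulr_suml -big_mkcond /=.
have HP : Prob P (fun x => k x == k u) = \sum_(w | k w == k u) P w by [].
rewrite -HP.
case: (eqVneq (Prob P (fun x => k x == k u)) 0) => [H0|Hn].
  by rewrite H0 mul0r (Prob0_P0 (A := fun x => k x == k u) (eqxx _) H0) !mul0r.
by rewrite mulrC divfK.
Qed.

Lemma tower2 (K1 K2 : eqType) (k1 : Omega -> K1) (k2 : Omega -> K2) F w :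
  refines k1 k2 -> mc k2 (mc k1 F) w = mc k2 F w.
Proof.
move=> hr.
change (cexp P (fun u => k2 u == k2 w) (mc k1 F) = cexp P (fun u => k2 u == k2 w) F).
rewrite /cexp; congr (_ * _).
rewrite !big_mkcond /=.
transitivity (Ex (fun u => (k2 u == k2 w)%:R * mc k1 F u)).
  by apply: eq_bigr => u _; case: (k2 u == k2 w); rewrite ?mul1r ?mul0r ?mulr0.
transitivity (Ex (mc k1 (fun u => (k2 u == k2 w)%:R * F u))).
  rewrite /Ex; apply: eq_bigr => u _; rewrite pullout // => a b e; by rewrite (hr _ _ e).
rewrite tower /Ex [RHS]big_mkcond; apply: eq_bigr => u _.
by case: (k2 u == k2 w); rewrite ?mul1r ?mul0r ?mulr0.
Qed.

Lemma decomp (K : eqType) (k : Omega -> K) G :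
  Ex (fun u => G u ^+ 2) =
  Ex (fun u => (G u - mc k G u) ^+ 2) + Ex (fun u => (mc k G u) ^+ 2).
Proof.
have c : Ex (fun u => mc k G u * G u) = Ex (fun u => mc k G u * mc k G u).
  rewrite -(tower k); apply: eq_bigr => u _; rewrite pullout //; exact: mc_meas.
transitivity (Ex (fun u => ((G u - mc k G u) ^+ 2 + (mc k G u) ^+ 2) +
                2 * (mc k G u * G u - mc k G u * mc k G u))).
  by apply: eq_bigr => u _; congr (_ * _); ring.
by rewrite ExD ExZ ExB c subrr mulr0 addr0 ExD.
Qed.

Lemma pythag (K1 K2 : eqType) (k1 : Omega -> K1) (k2 : Omega -> K2) g :
  refines k1 k2 ->
  Ex (fun u => (g u - mc k2 g u) ^+ 2) =
  Ex (fun u => (g u - mc k1 g u) ^+ 2) + Ex (fun u => (mc k1 g u - mc k2 g u) ^+ 2).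
Proof.
move=> hr.
have m2 : meas k1 (mc k2 g) by move=> a b e; apply: mc_meas; exact: hr.
have key : forall u, P u != 0 ->
   mc k1 (fun x => g x - mc k2 g x) u = mc k1 g u - mc k2 g u.
  by move=> u Pu; rewrite mcB (mc_measid m2 Pu).
rewrite (decomp k1 (fun x => g x - mc k2 g x)); congr (_ + _).
  by apply: Ex_ae => u Pu; rewrite key //; congr (_ ^+ 2); ring.
by apply: Ex_ae => u Pu; rewrite key.
Qed.

Lemma group_sum (K : eqType) (k : Omega -> K) (H : K -> R) :
  \sum_(v <- undup [seq k w | w <- enum Omega] | 0 < Prob P (fun w => k w == v))
     Prob P (fun w => k w == v) * H v = \sum_w P w * H (k w).
Proof.
rewrite big_mkcond /=.
transitivity (\sum_(v <- undup [seq k w | w <- enum Omega]) Prob P (fun w => k w == v) * H v).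
  apply: eq_bigr => v _; case: ifP => // hp.
  have -> : Prob P (fun w => k w == v) = 0.
    by apply/eqP; rewrite eq_le Prob_ge0 andbT leNgt hp.
  by rewrite mul0r.
transitivity (\sum_(v <- undup [seq k w | w <- enum Omega]) \sum_w
               (if k w == v then P w * H v else 0)).
  apply: eq_bigr => v _; rewrite /Prob mulr_suml big_mkcond.
  by apply: eq_bigr => w _; case: ifP; rewrite ?mul0r.
rewrite exchange_big /=; apply: eq_bigr => w _.
rewrite -big_mkcond /= (eq_bigl (pred1 (k w))) => [|v]; last by rewrite /= eq_sym.
rewrite -big_filter filter_pred1_uniq ?undup_uniq ?big_seq1 // mem_undup.
by apply: map_f; rewrite mem_enum.
Qed.

Lemma cvar_mc (K : eqType) (k : Omega -> K) g w :
  cvar P (fun u => k u == k w) g = mc k (fun u => (g u - mc k g u) ^+ 2) w.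
Proof.
rewrite /cvar /mc /cexp; congr (_ * _); apply: eq_bigr => u /eqP e.
by rewrite e.
Qed.

End Gen.

Section XPart.
Variables (R : realFieldType) (Omega : finType) (P : Omega -> R).
Hypothesis P_ge0 : forall w, 0 <= P w.
Variables (n : nat) (X : 'I_n -> Omega -> R).
Hypothesis indep : mutually_independent P X.

Lemma XT_eqE (S : {set 'I_n}) u w :
  (XT X S u == XT X S w) = [forall i in S, X i u == X i w].
Proof.
apply/eqP/forallP => [H i|H].
  apply/implyP => iS; have := congr1 (fun t => tnth t i) H.
  by rewrite !tnth_mktuple iS => ->.
apply: eq_from_tnth => i; rewrite !tnth_mktuple; case: ifP => // iS.
exact/eqP/(implyP (H i) iS).
Qed.

Lemma refines_XT (A B : {set 'I_n}) : B \subset A -> refines (XT X A) (XT X B).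
Proof.
move=> sBA u w /eqP; rewrite XT_eqE => /forallP H; apply/eqP; rewrite XT_eqE.
apply/forallP => i; apply/implyP => iB; exact: (implyP (H i) (subsetP sBA i iB)).
Qed.

Lemma XT_U1 (j : 'I_n) S u w :
  (XT X (j |: S) u == XT X (j |: S) w) = (XT X S u == XT X S w) && (X j u == X j w).
Proof.
rewrite !XT_eqE; apply/forallP/andP => [H|[/forallP H1 H2] i].
  split; last by apply: (implyP (H j)); rewrite setU11.
  apply/forallP => i; apply/implyP => iS; apply: (implyP (H i)).
  by rewrite in_setU1 iS orbT.
apply/implyP; rewrite in_setU1 => /orP [/eqP -> // | iS]; exact: (implyP (H1 i) iS).
Qed.

Lemma indep_cls (T' : {set 'I_n}) j b w : j \notin T' ->
  Prob P (fun u => (XT X T' u == XT X T' w) && (X j u == b)) =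
  Prob P (fun u => XT X T' u == XT X T' w) * Prob P (fun u => X j u == b).
Proof.
move=> jT.
have ij : forall i, i \in T' -> (i == j) = false.
  by move=> i iT; apply/eqP => eij; move: jT; rewrite -eij iT.
pose v := fun i => if i == j then b else X i w.
have e1 : Prob P (fun u => (XT X T' u == XT X T' w) && (X j u == b)) =
          Prob P (fun u => [forall i in j |: T', X i u == v i]).
  rewrite /Prob; apply: eq_bigl => u; rewrite XT_eqE.
  apply/andP/forallP => [[/forallP H1 H2] i|H].
    apply/implyP; rewrite in_setU1 => /orP [/eqP ->| iT]; first by rewrite /v eqxx.
    rewrite /v ij //; exact: (implyP (H1 i) iT).
  split; last by move: (implyP (H j)); rewrite setU11 /v eqxx; apply.
  apply/forallP => i; apply/implyP => iT.
  by move: (implyP (H i)); rewrite in_setU1 iT orbT /v ij //; apply.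
have e2 : Prob P (fun u => XT X T' u == XT X T' w) =
          Prob P (fun u => [forall i in T', X i u == (fun i => X i w) i]).
  by rewrite /Prob; apply: eq_bigl => u; rewrite XT_eqE.
rewrite e1 e2 !indep big_setU1 //= mulrC; congr (_ * _).
  by apply: eq_bigr => i iT; rewrite /v ij.
by rewrite /v eqxx.
Qed.

Lemma ind_fact (T' : {set 'I_n}) j b h : j \notin T' -> meas (XT X T') h ->
  Ex P (fun u => h u * (X j u == b)%:R) = Ex P h * Prob P (fun u => X j u == b).
Proof.
move=> jT hm.
rewrite -[LHS](tower P_ge0 (XT X T')).
transitivity (Ex P (fun u => h u * Prob P (fun x => X j x == b))).
  apply: Ex_ae => u Pu; rewrite pullout //; congr (_ * _).
  rewrite /mc /cexp.
  rewrite (_ : \sum_(x | _) _ = Prob P (fun x => (XT X T' x == XT X T' u) && (X j x == b))).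
    rewrite indep_cls // mulrAC divff ?mul1r //.
    exact: (Prob_neq0 P_ge0 (A := fun x => XT X T' x == XT X T' u) (eqxx _) Pu).
  rewrite /Prob [RHS]big_mkcond [LHS]big_mkcond; apply: eq_bigr => x _.
  by case: (XT X T' x == XT X T' u); case: (X j x == b); rewrite /= ?mulr1 ?mulr0.
by rewrite /Ex mulr_suml; apply: eq_bigr => u _; rewrite mulrA.
Qed.

Lemma mc_indep (T T' : {set 'I_n}) j h w : T \subset T' -> j \notin T' ->
  meas (XT X T') h -> P w != 0 ->
  mc P (XT X (j |: T)) h w = mc P (XT X T) h w.
Proof.
move=> sTT jT hm Pw; rewrite /mc /cexp.
have mi : meas (XT X T') (fun u => (XT X T u == XT X T w)%:R : R).
  by move=> a c e; rewrite (refines_XT sTT e).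
have mih : meas (XT X T') (fun u => (XT X T u == XT X T w)%:R * h u).
  by move=> a c e; rewrite (refines_XT sTT e) (hm _ _ e).
have N1 : \sum_(u | XT X (j |: T) u == XT X (j |: T) w) P u * h u =
   Ex P (fun u => ((XT X T u == XT X T w)%:R * h u) * (X j u == X j w)%:R).
  rewrite /Ex big_mkcond; apply: eq_bigr => u _; rewrite XT_U1.
  by case: (XT X T u == XT X T w); case: (X j u == X j w);
    rewrite /= ?mul1r ?mulr1 ?mul0r ?mulr0.
have D1 : Prob P (fun u => XT X (j |: T) u == XT X (j |: T) w) =
   Ex P (fun u => (XT X T u == XT X T w)%:R * (X j u == X j w)%:R).
  rewrite /Ex /Prob big_mkcond; apply: eq_bigr => u _; rewrite XT_U1.
  by case: (XT X T u == XT X T w); case: (X j u == X j w);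
    rewrite /= ?mul1r ?mulr1 ?mul0r ?mulr0.
have N2 : \sum_(u | XT X T u == XT X T w) P u * h u =
   Ex P (fun u => (XT X T u == XT X T w)%:R * h u).
  rewrite /Ex big_mkcond; apply: eq_bigr => u _.
  by case: (XT X T u == XT X T w); rewrite /= ?mul1r ?mul0r ?mulr0.
have D2 : Prob P (fun u => XT X T u == XT X T w) =
   Ex P (fun u => (XT X T u == XT X T w)%:R).
  rewrite /Ex /Prob big_mkcond; apply: eq_bigr => u _.
  by case: (XT X T u == XT X T w); rewrite /= ?mulr1 ?mulr0.
rewrite N1 D1 N2 D2 (@ind_fact T' j (X j w) _ jT mih) (@ind_fact T' j (X j w) _ jT mi).
have pn : Prob P (fun u => X j u == X j w) != 0.
  exact: (Prob_neq0 P_ge0 (A := fun u => X j u == X j w) (eqxx _) Pw).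
by rewrite invfM mulrACA divff // mulr1.
Qed.


Lemma EVar_E f S :
  EVar P X f S = Ex P (fun w => (f (Xvec X w) -
      mc P (XT X S) (fun u => f (Xvec X u)) w) ^+ 2).
Proof.
rewrite /EVar (group_sum P_ge0 (XT X S)
   (fun v => cvar P (fun w => XT X S w == v) (fun w => f (Xvec X w)))).
transitivity (Ex P (mc P (XT X S) (fun u => (f (Xvec X u) -
      mc P (XT X S) (fun u => f (Xvec X u)) u) ^+ 2))).
  by rewrite /Ex; apply: eq_bigr => w _; rewrite cvar_mc.
by rewrite tower.
Qed.

Lemma main_aux f (T T' : {set 'I_n}) (j : 'I_n) :
  T \subset T' -> j \notin T' ->
  EVar P X f (j |: T) - EVar P X f T >= EVar P X f (j |: T') - EVar P X f T'.
Proof.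
move=> sTT jT.
rewrite !EVar_E.
set g := fun u => f (Xvec X u).
rewrite (pythag P_ge0 g (refines_XT (subsetUr [set j] T))).
rewrite (pythag P_ge0 g (refines_XT (subsetUr [set j] T'))).
set D' := fun u => mc P (XT X (j |: T')) g u - mc P (XT X T') g u.
suff AB : Ex P (fun u => (mc P (XT X (j |: T)) g u - mc P (XT X T) g u) ^+ 2) <=
          Ex P (fun u => D' u ^+ 2) by rewrite /D' in AB; lra.
have key : forall u, P u != 0 ->
    mc P (XT X (j |: T)) D' u = mc P (XT X (j |: T)) g u - mc P (XT X T) g u.
  move=> u Pu; rewrite /D' mcB.
  rewrite (tower2 P_ge0 _ _ (refines_XT (setUS [set j] sTT))).
  rewrite (@mc_indep T T' j (mc P (XT X T') g) u sTT jT _ Pu); last exact: mc_meas.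
  by rewrite (tower2 P_ge0 _ _ (refines_XT sTT)).
rewrite (decomp P_ge0 (XT X (j |: T)) D').
rewrite (Ex_ae (G := fun u => (mc P (XT X (j |: T)) D' u) ^+ 2)); last first.
  by move=> u Pu; rewrite key.
rewrite lerDr; apply: Ex_ge0 => [u|u]; [exact: P_ge0 | exact: sqr_ge0].
Qed.

End XPart.

Theorem mainTheorem3 (R : realFieldType) (Omega : finType) (P : Omega -> R)
  (P_ge0 : forall w, 0 <= P w) (P_sum1 : \sum_w P w = 1)
  (n : nat) (X : 'I_n -> Omega -> R)
  (indep : mutually_independent P X)
  (f : n.-tuple R -> R) (T T' : {set 'I_n}) (j : 'I_n) :
  T \subset T' -> j \notin T' ->
  EVar P X f (j |: T) - EVar P X f T >= EVar P X f (j |: T') - EVar P X f T'.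
Proof. move=> h1 h2. have := (@main_aux R Omega P P_ge0 n X indep f T T' j h1 h2). move=> H. exact H. Qed.
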